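(* The set $\mathcal U\setminus(A_1\cup A_2\cup A_3)$ has four connected components $\mathcal U_0,\mathcal U_1,\mathcal U_2,\mathcal U_3$ ($\mathcal U_0$ the central triangle with vertices $a_1,a_2,a_3$, and $\mathcal U_i$ the region bounded by $A_i$ and $Q$), and $f$ maps each $\mathcal U_j$ homeomorphically onto $\mathcal U$.
   Context: $f=g\circ h$ with $g[x_1:x_2:x_3]=[x_1^2:x_2^2:x_3^2]$ and $h[x_1:x_2:x_3]=[x_1(-x_1+x_2+x_3):x_2(x_1-x_2+x_3):x_3(x_1+x_2-x_3)]$. $a_1=[0:1:1]$, $a_2=[1:0:1]$, $a_3=[1:1:0]$; $A_i$ is the line through $\{a_1,a_2,a_3\}\setminus\{a_i\}$. $Q=\{\rho=0\}$ with $\rho=x_1^2+x_2^2+x_3^2-2(x_1x_2+x_2x_3+x_3x_1)$, and $\mathcal U=\{[x]\in\mathbb{RP}^2:\rho(x)<0\}$, an open disk in $\mathbb{RP}^2$ with $a_1,a_2,a_3$ on its boundary. *)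

(* Defs.v *)
(* classical reals.  RP^2 is handled through the affine chart
   {x1+x2+x3 <> 0}, normalised as {x1+x2+x3 = 1}; U lies inside it. *)
From Stdlib Require Import Reals.
Open Scope R_scope.

Record pt := P3 { c1 : R; c2 : R; c3 : R }.

Definition dist (x y : pt) : R :=
  sqrt ((c1 x - c1 y)^2 + (c2 x - c2 y)^2 + (c3 x - c3 y)^2).

Definition set := pt -> Prop.
Definition seteq (A B : set) : Prop := forall x, A x <-> B x.
Definition subset (A B : set) : Prop := forall x, A x -> B x.

Definition open (O : set) : Prop :=
  forall x, O x -> exists e, 0 < e /\ forall y, dist x y < e -> O y.

Definition connected (S : set) : Prop :=
  forall O1 O2 : set, open O1 -> open O2 ->
    (forall x, S x -> O1 x \/ O2 x) ->
    (forall x, S x -> O1 x -> O2 x -> False) ->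
    (forall x, S x -> ~ O1 x) \/ (forall x, S x -> ~ O2 x).

Definition is_component (S C : set) : Prop :=
  (exists x, C x) /\ subset C S /\ connected C /\
  forall D : set, subset D S -> connected D -> subset C D -> subset D C.

Definition continuous_on (A : set) (g : pt -> pt) : Prop :=
  forall x, A x -> forall e, 0 < e -> exists d, 0 < d /\
    forall y, A y -> dist x y < d -> dist (g x) (g y) < e.

Definition homeo_onto (g : pt -> pt) (A B : set) : Prop :=
  (forall x, A x -> B (g x)) /\ continuous_on A g /\
  exists k : pt -> pt,
    (forall y, B y -> A (k y)) /\
    (forall x, A x -> k (g x) = x) /\
    (forall y, B y -> g (k y) = y) /\
    continuous_on B k.

Definition gmap (x : pt) : pt := P3 (c1 x ^ 2) (c2 x ^ 2) (c3 x ^ 2).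
Definition hmap (x : pt) : pt :=
  P3 (c1 x * (- c1 x + c2 x + c3 x))
     (c2 x * (c1 x - c2 x + c3 x))
     (c3 x * (c1 x + c2 x - c3 x)).
(* homogeneous lift of f = g o h *)
Definition fhom (x : pt) : pt := gmap (hmap x).

Definition nrm (y : pt) : pt :=
  let s := c1 y + c2 y + c3 y in P3 (c1 y / s) (c2 y / s) (c3 y / s).

(* f expressed in the chart *)
Definition fchart (x : pt) : pt := nrm (fhom x).

Definition a1 : pt := P3 0 1 1.
Definition a2 : pt := P3 1 0 1.
Definition a3 : pt := P3 1 1 0.

Definition det3 (x y z : pt) : R :=
    c1 x * (c2 y * c3 z - c3 y * c2 z)
  - c2 x * (c1 y * c3 z - c3 y * c1 z)
  + c3 x * (c1 y * c2 z - c2 y * c1 z).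

Definition A1 : set := fun x => det3 x a2 a3 = 0.
Definition A2 : set := fun x => det3 x a1 a3 = 0.
Definition A3 : set := fun x => det3 x a1 a2 = 0.

Definition rho (x : pt) : R :=
  c1 x ^ 2 + c2 x ^ 2 + c3 x ^ 2 - 2 * (c1 x * c2 x + c2 x * c3 x + c3 x * c1 x).

Definition chart : set := fun x => c1 x + c2 x + c3 x = 1.
Definition U : set := fun x => chart x /\ rho x < 0.

Definition Uminus : set := fun x => U x /\ ~ A1 x /\ ~ A2 x /\ ~ A3 x.

(* "x lies on the same side of A_i as a_i" (meaningful in the chart) *)
Definition side1 (x : pt) : R := det3 x a2 a3 * det3 a1 a2 a3.
Definition side2 (x : pt) : R := det3 x a1 a3 * det3 a2 a1 a3.
Definition side3 (x : pt) : R := det3 x a1 a2 * det3 a3 a1 a2.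

(* U_0: the open central triangle with vertices a1 a2 a3;
   U_i: the part of U on the other side of A_i than the triangle
        (the region bounded by A_i and Q) *)
Definition Ucomp (j : nat) : set :=
  match j with
  | O => fun x => U x /\ 0 < side1 x /\ 0 < side2 x /\ 0 < side3 x
  | 1%nat => fun x => U x /\ side1 x < 0
  | 2%nat => fun x => U x /\ side2 x < 0
  | _ => fun x => U x /\ side3 x < 0
  end.

(* Main.v *)
Require Import Defs.
From Stdlib Require Import Reals.
From Stdlib Require Import Lra Psatz ClassicalDescription Classical.
Require Import Defs.
Open Scope R_scope.


Lemma cpt_elim f u : continuity_pt f u -> forall e, 0<e -> exists a, 0<a /\
  forall v, Rabs (v-u) < a -> Rabs (f v - f u) < e.
Proof.
  intros H e He; destruct (H e He) as [a [Ha H2]]. exists a; split; auto.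
  intros v Hv. destruct (Req_dec v u) as [->|Hn].
  - rewrite Rminus_diag, Rabs_R0; auto.
  - apply (H2 v). split; [split; [exact I| auto]| exact Hv].
Qed.

Lemma continuity_pt_id x : continuity_pt id x.
Proof. apply derivable_continuous_pt, derivable_pt_id. Qed.

Definition cont3 (A : set) (F : pt -> R) : Prop :=
  forall x, A x -> forall e, 0 < e -> exists d, 0 < d /\
    forall y, A y -> Defs.dist x y < d -> Rabs (F x - F y) < e.

Lemma c1_le x y : Rabs (c1 x - c1 y) <= Defs.dist x y.
Proof.
  unfold Defs.dist. rewrite <- (sqrt_pow2 (Rabs (c1 x - c1 y))) by apply Rabs_pos.
  apply sqrt_le_1_alt. rewrite pow2_abs.
  pose proof (pow2_ge_0 (c2 x - c2 y)); pose proof (pow2_ge_0 (c3 x - c3 y)); lra.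
Qed.
Lemma c2_le x y : Rabs (c2 x - c2 y) <= Defs.dist x y.
Proof.
  unfold Defs.dist. rewrite <- (sqrt_pow2 (Rabs (c2 x - c2 y))) by apply Rabs_pos.
  apply sqrt_le_1_alt. rewrite pow2_abs.
  pose proof (pow2_ge_0 (c1 x - c1 y)); pose proof (pow2_ge_0 (c3 x - c3 y)); lra.
Qed.
Lemma c3_le x y : Rabs (c3 x - c3 y) <= Defs.dist x y.
Proof.
  unfold Defs.dist. rewrite <- (sqrt_pow2 (Rabs (c3 x - c3 y))) by apply Rabs_pos.
  apply sqrt_le_1_alt. rewrite pow2_abs.
  pose proof (pow2_ge_0 (c2 x - c2 y)); pose proof (pow2_ge_0 (c1 x - c1 y)); lra.
Qed.

Lemma cont3_c1 A : cont3 A c1.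
Proof. intros x _ e He; exists e; split; auto; intros y _ H; pose proof (c1_le x y); lra. Qed.
Lemma cont3_c2 A : cont3 A c2.
Proof. intros x _ e He; exists e; split; auto; intros y _ H; pose proof (c2_le x y); lra. Qed.
Lemma cont3_c3 A : cont3 A c3.
Proof. intros x _ e He; exists e; split; auto; intros y _ H; pose proof (c3_le x y); lra. Qed.
Lemma cont3_const A c : cont3 A (fun _ => c).
Proof. intros x _ e He; exists 1; split; [lra|]; intros; rewrite Rminus_diag, Rabs_R0; auto. Qed.

Lemma cont3_plus A F G : cont3 A F -> cont3 A G -> cont3 A (fun x => F x + G x).
Proof.
  intros HF HG x Ax e He.
  destruct (HF x Ax (e/2)) as [d1 [H1 K1]]; [lra|].
  destruct (HG x Ax (e/2)) as [d2 [H2 K2]]; [lra|].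
  exists (Rmin d1 d2); split; [apply Rmin_pos; auto|].
  intros y Ay Hd. specialize (K1 y Ay). specialize (K2 y Ay).
  assert (Defs.dist x y < d1) by (eapply Rlt_le_trans; [exact Hd| apply Rmin_l]).
  assert (Defs.dist x y < d2) by (eapply Rlt_le_trans; [exact Hd| apply Rmin_r]).
  specialize (K1 H). specialize (K2 H0).
  replace (F x + G x - (F y + G y)) with ((F x - F y) + (G x - G y)) by ring.
  eapply Rle_lt_trans; [apply Rabs_triang|]. lra.
Qed.

Lemma cont3_comp A F (f : R -> R) : cont3 A F -> (forall x, A x -> continuity_pt f (F x)) ->
  cont3 A (fun x => f (F x)).
Proof.
  intros HF Hf x Ax e He.
  destruct (cpt_elim _ _ (Hf x Ax) e He) as [a [Ha K]].
  destruct (HF x Ax a Ha) as [d [Hd K2]].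
  exists d; split; auto. intros y Ay Hy.
  specialize (K (F y)). rewrite <- Rabs_Ropp. replace (- (f (F x) - f (F y))) with (f (F y) - f (F x)) by ring.
  apply K. rewrite <- Rabs_Ropp. replace (- (F y - F x)) with (F x - F y) by ring. auto.
Qed.

Lemma cont3_ext A F G : cont3 A F -> (forall x, A x -> F x = G x) -> cont3 A G.
Proof.
  intros HF E x Ax e He. destruct (HF x Ax e He) as [d [Hd K]]. exists d; split; auto.
  intros y Ay Hy. rewrite <- (E x Ax), <- (E y Ay). auto.
Qed.

Lemma cont3_opp A F : cont3 A F -> cont3 A (fun x => - F x).
Proof.
  intros H. apply (cont3_comp A F Ropp H). intros. apply continuity_pt_opp, continuity_pt_id.
Qed.

Lemma cont3_sq A F : cont3 A F -> cont3 A (fun x => F x * F x).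
Proof.
  intros H. apply (cont3_comp A F (fun u => u * u) H). intros.
  apply (continuity_pt_mult id id); apply continuity_pt_id.
Qed.

Lemma cont3_scal A F c : cont3 A F -> cont3 A (fun x => c * F x).
Proof.
  intros H. apply (cont3_comp A F (fun u => c * u) H). intros.
  apply (continuity_pt_mult (fct_cte c) id); [apply continuity_pt_const; intros u v; reflexivity|apply continuity_pt_id].
Qed.

Lemma cont3_mult A F G : cont3 A F -> cont3 A G -> cont3 A (fun x => F x * G x).
Proof.
  intros HF HG.
  apply cont3_ext with (fun x => /4 * ((F x + G x) * (F x + G x)) + - (/4 * ((F x + - G x) * (F x + - G x)))).
  - apply cont3_plus; [apply cont3_scal, cont3_sq, cont3_plus; auto|].
    apply cont3_opp, cont3_scal, cont3_sq, cont3_plus; auto. apply cont3_opp; auto.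
  - intros; field.
Qed.

Lemma cont3_minus A F G : cont3 A F -> cont3 A G -> cont3 A (fun x => F x - G x).
Proof. intros; apply cont3_plus; auto; apply cont3_opp; auto. Qed.

Lemma cont3_pow2 A F : cont3 A F -> cont3 A (fun x => F x ^ 2).
Proof. intros; apply cont3_ext with (fun x => F x * F x); [apply cont3_mult; auto|intros; ring]. Qed.

Lemma cont3_inv A F : cont3 A F -> (forall x, A x -> F x <> 0) -> cont3 A (fun x => / F x).
Proof.
  intros H Hn. apply (cont3_comp A F Rinv H). intros x Ax.
  apply (continuity_pt_inv id); [apply continuity_pt_id| apply Hn; auto].
Qed.

Lemma cont3_div A F G : cont3 A F -> cont3 A G -> (forall x, A x -> G x <> 0) -> cont3 A (fun x => F x / G x).
Proof. intros; apply cont3_mult; auto; apply cont3_inv; auto. Qed.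

Lemma cont3_sqrt A F : cont3 A F -> (forall x, A x -> 0 <= F x) -> cont3 A (fun x => sqrt (F x)).
Proof. intros H Hp. apply (cont3_comp A F sqrt H). intros; apply continuity_pt_sqrt; auto. Qed.

Lemma cont_on A g : cont3 A (fun x => c1 (g x)) -> cont3 A (fun x => c2 (g x)) -> cont3 A (fun x => c3 (g x)) ->
  continuous_on A g.
Proof.
  intros H1 H2 H3 x Ax e He.
  destruct (H1 x Ax (e/2)) as [d1 [P1 K1]]; [lra|].
  destruct (H2 x Ax (e/2)) as [d2 [P2 K2]]; [lra|].
  destruct (H3 x Ax (e/2)) as [d3 [P3' K3]]; [lra|].
  exists (Rmin d1 (Rmin d2 d3)); split.
  { repeat apply Rmin_pos; auto. }
  intros y Ay Hy.
  assert (Defs.dist x y < d1) by (eapply Rlt_le_trans; [exact Hy| apply Rmin_l]).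
  assert (Defs.dist x y < d2) by (eapply Rlt_le_trans; [exact Hy| eapply Rle_trans; [apply Rmin_r|apply Rmin_l]]).
  assert (Defs.dist x y < d3) by (eapply Rlt_le_trans; [exact Hy| eapply Rle_trans; [apply Rmin_r|apply Rmin_r]]).
  specialize (K1 y Ay H). specialize (K2 y Ay H0). specialize (K3 y Ay H4).
  unfold Defs.dist.
  rewrite <- (sqrt_pow2 e) by lra. apply sqrt_lt_1_alt. split.
  { pose proof (pow2_ge_0 (c1 (g x) - c1 (g y))); pose proof (pow2_ge_0 (c2 (g x) - c2 (g y)));
    pose proof (pow2_ge_0 (c3 (g x) - c3 (g y))); lra. }
  rewrite <- (pow2_abs (c1 (g x) - c1 (g y))), <- (pow2_abs (c2 (g x) - c2 (g y))), <- (pow2_abs (c3 (g x) - c3 (g y))).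
  pose proof (Rabs_pos (c1 (g x) - c1 (g y))); pose proof (Rabs_pos (c2 (g x) - c2 (g y))); pose proof (Rabs_pos (c3 (g x) - c3 (g y))).
  nra.
Qed.

Definition L1 x := - c1 x + c2 x + c3 x.
Definition L2 x := c1 x - c2 x + c3 x.
Definition L3 x := c1 x + c2 x - c3 x.

Lemma side1_eq x : side1 x = 2 * L1 x. Proof. unfold side1, det3, L1, a1, a2, a3; simpl; ring. Qed.
Lemma side2_eq x : side2 x = 2 * L2 x. Proof. unfold side2, det3, L2, a1, a2, a3; simpl; ring. Qed.
Lemma side3_eq x : side3 x = 2 * L3 x. Proof. unfold side3, det3, L3, a1, a2, a3; simpl; ring. Qed.
Lemma A1_iff x : A1 x <-> L1 x = 0. Proof. unfold A1, det3, L1, a2, a3; simpl; split; intro; lra. Qed.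
Lemma A2_iff x : A2 x <-> L2 x = 0. Proof. unfold A2, det3, L2, a1, a3; simpl; split; intro; lra. Qed.
Lemma A3_iff x : A3 x <-> L3 x = 0. Proof. unfold A3, det3, L3, a1, a2; simpl; split; intro; lra. Qed.

Lemma U_pos x : U x -> 0 < c1 x /\ 0 < c2 x /\ 0 < c3 x.
Proof.
  unfold U, chart, rho; intros [Hc Hr].
  assert (0 < c1 x * c2 x) by (pose proof (pow2_ge_0 (c1 x + c2 x - c3 x)); nra).
  assert (0 < c1 x * c3 x) by (pose proof (pow2_ge_0 (c1 x - c2 x + c3 x)); nra).
  assert (0 < c2 x * c3 x) by (pose proof (pow2_ge_0 (- c1 x + c2 x + c3 x)); nra).
  destruct (Rlt_or_le 0 (c1 x)).
  - split; [auto|]. split; nra.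
  - assert (c1 x < 0) by nra. assert (c2 x < 0) by nra. assert (c3 x < 0) by nra. lra.
Qed.

Definition seg (x y : pt) (t : R) : pt :=
  P3 (c1 x + t * (c1 y - c1 x)) (c2 x + t * (c2 y - c2 x)) (c3 x + t * (c3 y - c3 x)).

Definition convex (S : set) := forall x y t, S x -> S y -> 0 <= t <= 1 -> S (seg x y t).

Lemma seg0 x y : seg x y 0 = x. Proof. destruct x; unfold seg; simpl; f_equal; ring. Qed.
Lemma seg1 x y : seg x y 1 = y. Proof. destruct y; unfold seg; simpl; f_equal; ring. Qed.

Lemma dist_seg x y s s' : Defs.dist (seg x y s) (seg x y s') = Rabs (s - s') * Defs.dist x y.
Proof.
  unfold Defs.dist, seg; simpl.
  rewrite <- (sqrt_pow2 (Rabs (s - s'))) by apply Rabs_pos.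
  rewrite <- sqrt_mult_alt by apply pow2_ge_0. f_equal. rewrite pow2_abs. ring.
Qed.

Lemma dist_nonneg x y : 0 <= Defs.dist x y. Proof. apply sqrt_pos. Qed.

Definition clamp t := Rmax 0 (Rmin 1 t).
Lemma clamp_in t : 0 <= clamp t <= 1.
Proof. unfold clamp, Rmax, Rmin; repeat destruct Rle_dec; lra. Qed.
Lemma clamp_lip a b : Rabs (clamp a - clamp b) <= Rabs (a - b).
Proof. unfold clamp, Rmax, Rmin; repeat destruct Rle_dec; unfold Rabs; repeat destruct Rcase_abs; lra. Qed.
Lemma clamp0 : clamp 0 = 0. Proof. unfold clamp, Rmax, Rmin; repeat destruct Rle_dec; lra. Qed.
Lemma clamp1 : clamp 1 = 1. Proof. unfold clamp, Rmax, Rmin; repeat destruct Rle_dec; lra. Qed.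

Lemma convex_connected S : convex S -> connected S.
Proof.
  intros HS O1 O2 H1 H2 Hcov Hdis.
  destruct (classic (forall x, S x -> ~ O1 x)) as [h|h]; [left; auto|]. right.
  intros y Sy O2y.
  apply not_all_ex_not in h. destruct h as [x h].
  apply imply_to_and in h. destruct h as [Sx h]. apply NNPP in h. rename h into O1x.
  set (f := fun t => if excluded_middle_informative (O2 (seg x y (clamp t))) then 1 else -1).
  assert (loc : forall t, exists a, 0 < a /\ forall t', Rabs (t' - t) < a -> f t' = f t).
  { intro t. set (q := seg x y (clamp t)).
    assert (Sq : S q) by (apply HS; auto; apply clamp_in).
    set (D := Defs.dist x y). assert (0 <= D) by apply dist_nonneg.
    assert (close : forall e, 0 < e -> forall t', Rabs (t' - t) < e / (D + 1) ->
               Defs.dist q (seg x y (clamp t')) < e).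
    { intros e He t' Ht. unfold q. rewrite dist_seg.
      assert (Rabs (clamp t - clamp t') <= Rabs (t' - t)).
      { replace (t' - t) with (- (t - t')) by ring. rewrite Rabs_Ropp.
        apply clamp_lip. }
      assert (e / (D+1) * D < e).
      { apply Rmult_lt_reg_r with (D+1); [lra|]. unfold Rdiv.
        replace (e * / (D + 1) * D * (D + 1)) with (e * D * ((D+1) * / (D+1))) by ring.
        rewrite Rinv_r by lra. nra. }
      pose proof (Rabs_pos (clamp t - clamp t')).
      apply Rle_lt_trans with (e / (D + 1) * D); [|auto].
      apply Rmult_le_compat_r; [auto|lra]. }
    destruct (excluded_middle_informative (O2 q)) as [o2|no2].
    - destruct (H2 q o2) as [e [He K]]. exists (e / (D+1)). split.
      { apply Rdiv_lt_0_compat; lra. }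
      intros t' Ht. unfold f. fold q.
      destruct (excluded_middle_informative (O2 (seg x y (clamp t')))) as [|n]; 
      destruct (excluded_middle_informative (O2 q)); try reflexivity; try contradiction.
      exfalso; apply n, K, close; auto.
    - assert (o1 : O1 q) by (destruct (Hcov q Sq); tauto).
      destruct (H1 q o1) as [e [He K]]. exists (e / (D+1)). split.
      { apply Rdiv_lt_0_compat; lra. }
      intros t' Ht. unfold f. fold q.
      destruct (excluded_middle_informative (O2 (seg x y (clamp t')))) as [o|n];
      destruct (excluded_middle_informative (O2 q)); try reflexivity; try contradiction.
      exfalso. apply (Hdis (seg x y (clamp t'))); [apply HS; auto; apply clamp_in | apply K, close; auto | auto]. }
  assert (cf : continuity f).
  { intros t e He. destruct (loc t) as [a [Ha K]]. exists a. split; [lra|].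
    intros t' [_ Ht]. simpl in Ht. unfold R_dist in Ht. simpl. unfold R_dist.
    rewrite (K t' Ht). rewrite Rminus_diag, Rabs_R0; auto. }
  assert (f0 : f 0 < 0).
  { unfold f. rewrite clamp0, seg0. destruct excluded_middle_informative as [o|]; [|lra].
    exfalso; apply (Hdis x); auto. }
  assert (f1 : 0 < f 1).
  { unfold f. rewrite clamp1, seg1. destruct excluded_middle_informative; [lra|contradiction]. }
  destruct (IVT f 0 1 cf ltac:(lra) f0 f1) as [z [_ Hz]].
  revert Hz. unfold f. destruct excluded_middle_informative; lra.
Qed.

Definition TT : set := fun _ => True.

Lemma open_pos F : cont3 TT F -> open (fun x => 0 < F x).
Proof.
  intros H x Hx. destruct (H x I (F x) Hx) as [d [Hd K]]. exists d; split; auto.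
  intros y Hy. specialize (K y I Hy). unfold Rabs in K; destruct Rcase_abs; lra.
Qed.
Lemma open_neg F : cont3 TT F -> open (fun x => F x < 0).
Proof.
  intros H. assert (open (fun x => 0 < - F x)) by (apply open_pos, cont3_opp, H).
  intros x Hx. destruct (H0 x ltac:(lra)) as [d [Hd K]]. exists d; split; auto. intros y Hy; specialize (K y Hy); lra.
Qed.
Lemma open_and O1 O2 : open O1 -> open O2 -> open (fun x => O1 x /\ O2 x).
Proof.
  intros H1 H2 x [o1 o2]. destruct (H1 x o1) as [d1 [P1 K1]]. destruct (H2 x o2) as [d2 [P2 K2]].
  exists (Rmin d1 d2). split; [apply Rmin_pos; auto|]. intros y Hy. split.
  - apply K1. eapply Rlt_le_trans; [exact Hy|apply Rmin_l].
  - apply K2. eapply Rlt_le_trans; [exact Hy|apply Rmin_r].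
Qed.
Lemma open_or O1 O2 : open O1 -> open O2 -> open (fun x => O1 x \/ O2 x).
Proof.
  intros H1 H2 x [o|o]; [destruct (H1 x o) as [d [P K]]|destruct (H2 x o) as [d [P K]]];
  exists d; split; auto.
Qed.

Lemma cont3_L1 A : cont3 A L1.
Proof. unfold L1. apply cont3_plus; [apply cont3_plus|]; try apply cont3_opp; try apply cont3_c1; try apply cont3_c2; apply cont3_c3. Qed.
Lemma cont3_L2 A : cont3 A L2.
Proof. unfold L2. apply cont3_plus; [apply cont3_minus|]; try apply cont3_c1; try apply cont3_c2; apply cont3_c3. Qed.
Lemma cont3_L3 A : cont3 A L3.
Proof. unfold L3. apply cont3_minus; [apply cont3_plus|]; try apply cont3_c1; try apply cont3_c2; apply cont3_c3. Qed.

Lemma pos_ne a : 0 <= a -> a <> 0 -> 0 < a.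
Proof. intros; destruct (Rle_lt_or_eq_dec 0 a); auto; congruence. Qed.

Lemma L_sums x : U x -> 0 < L1 x + L2 x /\ 0 < L1 x + L3 x /\ 0 < L2 x + L3 x.
Proof. intro H; destruct (U_pos x H) as [? [? ?]]; unfold L1, L2, L3; lra. Qed.

Lemma Ucomp_iff j x : Ucomp j x <->
  match j with
  | O => U x /\ 0 < L1 x /\ 0 < L2 x /\ 0 < L3 x
  | 1%nat => U x /\ L1 x < 0
  | 2%nat => U x /\ L2 x < 0
  | _ => U x /\ L3 x < 0 end.
Proof.
  destruct j as [|[|[|j]]]; simpl; rewrite ?side1_eq, ?side2_eq, ?side3_eq; intuition lra.
Qed.

Lemma U_convex : convex U.
Proof.
  intros x y t [Cx Rx] [Cy Ry] Ht. unfold U, chart, rho in *. unfold seg; cbn [c1 c2 c3].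
  split; [nra|].
  set (d1 := c1 y - c1 x). set (d2 := c2 y - c2 x). set (d3 := c3 y - c3 x).
  assert (Hs : d1 + d2 + d3 = 0) by (unfold d1, d2, d3; lra).
  assert (Hq : 0 <= d1^2 + d2^2 + d3^2 - 2*(d1*d2 + d2*d3 + d3*d1)).
  { assert (d1^2 + d2^2 + d3^2 - 2*(d1*d2 + d2*d3 + d3*d1) =
     ((-d1+d2+d3)^2 + (d1-d2+d3)^2 + (d1+d2-d3)^2 - (d1+d2+d3)^2)/2) by (field).
    rewrite H, Hs. pose proof (pow2_ge_0 (-d1+d2+d3)); pose proof (pow2_ge_0 (d1-d2+d3)); pose proof (pow2_ge_0 (d1+d2-d3)). lra. }
  set (rx := c1 x ^ 2 + c2 x ^ 2 + c3 x ^ 2 - 2 * (c1 x * c2 x + c2 x * c3 x + c3 x * c1 x)) in *.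
  set (ry := c1 y ^ 2 + c2 y ^ 2 + c3 y ^ 2 - 2 * (c1 y * c2 y + c2 y * c3 y + c3 y * c1 y)) in *.
  set (rd := d1^2 + d2^2 + d3^2 - 2*(d1*d2 + d2*d3 + d3*d1)) in *.
  assert (E : (c1 x + t * d1) ^ 2 + (c2 x + t * d2) ^ 2 + (c3 x + t * d3) ^ 2 -
    2 * ((c1 x + t * d1) * (c2 x + t * d2) + (c2 x + t * d2) * (c3 x + t * d3) +
         (c3 x + t * d3) * (c1 x + t * d1)) = (1 - t) * rx + t * ry - t * (1 - t) * rd).
  { unfold rx, ry, rd, d1, d2, d3; ring. }
  rewrite E. assert (0 <= t * (1-t)) by nra.
  assert ((1-t)*rx <= (1-t) * Rmax rx ry) by (apply Rmult_le_compat_l; [lra|apply Rmax_l]).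
  assert (t*ry <= t * Rmax rx ry) by (apply Rmult_le_compat_l; [lra|apply Rmax_r]).
  assert (Rmax rx ry < 0) by (apply Rmax_lub_lt; auto).
  assert (0 <= t * (1-t) * rd) by (apply Rmult_le_pos; auto). lra.
Qed.

Lemma L1_seg x y t : L1 (seg x y t) = (1 - t) * L1 x + t * L1 y. Proof. unfold L1, seg; simpl; ring. Qed.
Lemma L2_seg x y t : L2 (seg x y t) = (1 - t) * L2 x + t * L2 y. Proof. unfold L2, seg; simpl; ring. Qed.
Lemma L3_seg x y t : L3 (seg x y t) = (1 - t) * L3 x + t * L3 y. Proof. unfold L3, seg; simpl; ring. Qed.

Lemma Ucomp_convex j : convex (Ucomp j).
Proof.
  intros x y t Hx Hy Ht. apply Ucomp_iff in Hx. apply Ucomp_iff in Hy. apply Ucomp_iff.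
  destruct j as [|[|[|j]]]; rewrite ?L1_seg, ?L2_seg, ?L3_seg;
  (split; [apply U_convex; tauto|]); repeat split; nra.
Qed.

Lemma Ucomp_connected j : connected (Ucomp j).
Proof. apply convex_connected, Ucomp_convex. Qed.

Lemma Uminus_iff x : Uminus x <-> U x /\ L1 x <> 0 /\ L2 x <> 0 /\ L3 x <> 0.
Proof. unfold Uminus. rewrite A1_iff, A2_iff, A3_iff. tauto. Qed.

Lemma Ucomp_sub j : subset (Ucomp j) Uminus.
Proof.
  intros x H. apply Ucomp_iff in H. apply Uminus_iff.
  destruct j as [|[|[|j]]]; destruct H as [HU H]; pose proof (L_sums x HU); (split; [auto|]); repeat split; intro; intuition lra.
Qed.

Lemma classify x : Uminus x -> Ucomp 0 x \/ Ucomp 1 x \/ Ucomp 2 x \/ Ucomp 3 x.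
Proof.
  intro H; apply Uminus_iff in H. destruct H as [HU [n1 [n2 n3]]].
  rewrite !Ucomp_iff.
  destruct (Rlt_or_le (L1 x) 0); [tauto|].
  destruct (Rlt_or_le (L2 x) 0); [tauto|].
  destruct (Rlt_or_le (L3 x) 0); [tauto|].
  left; split; [auto|]; repeat split;
  apply pos_ne; auto.
Qed.

Lemma cont3_TT_neg F : cont3 TT F -> open (fun x => F x < 0).
Proof. apply open_neg. Qed.

Lemma sep_lemma (D O1 O2 : set) : connected D -> open O1 -> open O2 ->
  (forall y, D y -> O1 y \/ O2 y) -> (forall y, D y -> O1 y -> O2 y -> False) ->
  forall x, D x -> O1 x -> forall y, D y -> O1 y.
Proof.
  intros C H1 H2 Hc Hd x Dx O1x y Dy.
  destruct (C O1 O2 H1 H2 Hc Hd) as [h|h].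
  - exfalso; apply (h x); auto.
  - destruct (Hc y Dy); auto. exfalso; apply (h y); auto.
Qed.

Lemma trap j D : subset D Uminus -> connected D -> forall x, D x -> Ucomp j x -> subset D (Ucomp j).
Proof.
  intros Hs C x Dx Hx y Dy.
  pose proof (fun z (h : D z) => proj1 (Uminus_iff z) (Hs z h)) as HD.
  apply Ucomp_iff in Hx. apply Ucomp_iff.
  destruct j as [|[|[|j]]].
  - assert (K := sep_lemma D (fun z => 0 < L1 z /\ 0 < L2 z /\ 0 < L3 z)
              (fun z => L1 z < 0 \/ L2 z < 0 \/ L3 z < 0) C).
    assert (Hy := HD y Dy).
    destruct (K ltac:(repeat apply open_and; apply open_pos; first [apply cont3_L1|apply cont3_L2|apply cont3_L3])
                ltac:(repeat apply open_or; apply open_neg; first [apply cont3_L1|apply cont3_L2|apply cont3_L3])) with x y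
      as [? [? ?]]; auto; try tauto.
    + intros z Dz. destruct (HD z Dz) as [_ [? [? ?]]].
      destruct (Rlt_or_le (L1 z) 0); [tauto|]. destruct (Rlt_or_le (L2 z) 0); [tauto|].
      destruct (Rlt_or_le (L3 z) 0); [tauto|]. left; repeat split;
      apply pos_ne; auto.
    + intros z _ [? [? ?]] [?|[?|?]]; lra.
  - assert (K := sep_lemma D (fun z => L1 z < 0) (fun z => 0 < L1 z) C
            (open_neg _ (cont3_L1 _)) (open_pos _ (cont3_L1 _))).
    split; [apply (HD y Dy)|]. apply (K) with x; try tauto.
    + intros z Dz. destruct (HD z Dz) as [_ [? _]]. destruct (Rlt_or_le (L1 z) 0); [tauto|right]; apply pos_ne; auto.
    + intros; lra.
  - assert (K := sep_lemma D (fun z => L2 z < 0) (fun z => 0 < L2 z) C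
            (open_neg _ (cont3_L2 _)) (open_pos _ (cont3_L2 _))).
    split; [apply (HD y Dy)|]. apply (K) with x; try tauto.
    + intros z Dz. destruct (HD z Dz) as [_ [_ [? _]]]. destruct (Rlt_or_le (L2 z) 0); [tauto|right]; apply pos_ne; auto.
    + intros; lra.
  - assert (K := sep_lemma D (fun z => L3 z < 0) (fun z => 0 < L3 z) C
            (open_neg _ (cont3_L3 _)) (open_pos _ (cont3_L3 _))).
    split; [apply (HD y Dy)|]. apply (K) with x; try tauto.
    + intros z Dz. destruct (HD z Dz) as [_ [_ [_ ?]]]. destruct (Rlt_or_le (L3 z) 0); [tauto|right]; apply pos_ne; auto.
    + intros; lra.
Qed.

Definition wit (j : nat) : pt :=
  match j with
  | O => P3 (1/3) (1/3) (1/3)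
  | 1%nat => P3 (3/5) (1/5) (1/5)
  | 2%nat => P3 (1/5) (3/5) (1/5)
  | _ => P3 (1/5) (1/5) (3/5) end.

Lemma wit_in j : Ucomp j (wit j).
Proof.
  apply Ucomp_iff. destruct j as [|[|[|j]]]; unfold U, chart, rho, L1, L2, L3; simpl; repeat split; lra.
Qed.

Lemma disjoint i j x : (i <= 3)%nat -> (j <= 3)%nat -> Ucomp i x -> Ucomp j x -> i = j.
Proof.
  intros Hi Hj H1 H2. apply Ucomp_iff in H1. apply Ucomp_iff in H2.
  destruct i as [|[|[|[|i]]]]; try lia; destruct j as [|[|[|[|j]]]]; try lia; auto;
  destruct H1 as [HU ?]; pose proof (L_sums x HU); exfalso; lra.
Qed.

Lemma connected_ext A B : seteq A B -> connected A -> connected B.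
Proof.
  intros E C O1 O2 H1 H2 Hc Hd. destruct (C O1 O2 H1 H2) as [h|h].
  - intros; apply Hc, E; auto.
  - intros x Ax; apply Hd, E; auto.
  - left; intros x Bx; apply h, E; auto.
  - right; intros x Bx; apply h, E; auto.
Qed.

Theorem part1 : forall C : set, is_component Uminus C <->
     exists j : nat, (j <= 3)%nat /\ seteq C (Ucomp j).
Proof.
  intros C. split.
  - intros [[x Cx] [Hs [Hc Hm]]].
    assert (exists j, (j <= 3)%nat /\ Ucomp j x) as [j [Hj Hx]].
    { destruct (classify x (Hs x Cx)) as [h|[h|[h|h]]]; eexists; split; [| exact h| |exact h| |exact h| |exact h]; lia. }
    exists j; split; auto.
    assert (S1 : subset C (Ucomp j)) by (apply (trap j C Hs Hc x Cx Hx)).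
    assert (S2 : subset (Ucomp j) C) by (apply Hm; [apply Ucomp_sub|apply Ucomp_connected|auto]).
    intro y; split; auto.
  - intros [j [Hj E]].
    assert (Cw : C (wit j)) by (apply E, wit_in).
    split; [exists (wit j); auto|]. split; [intros y Cy; apply Ucomp_sub with j, E, Cy|].
    split; [apply connected_ext with (Ucomp j); [intro; split; apply E| apply Ucomp_connected]|].
    intros D Hs Hc Hsub y Dy. apply E. apply (trap j D Hs Hc (wit j)); auto. apply wit_in.
Qed.

Theorem part2 : forall i j : nat, (i <= 3)%nat -> (j <= 3)%nat -> i <> j ->
     ~ seteq (Ucomp i) (Ucomp j).
Proof.
  intros i j Hi Hj Hn E. apply Hn. apply (disjoint i j (wit i)); auto.
  apply wit_in. apply E, wit_in.
Qed.

Definition scale (c : R) (v : pt) : pt := P3 (c * c1 v) (c * c2 v) (c * c3 v).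
Definition ssum (v : pt) : R := c1 v + c2 v + c3 v.
Definition mlin (z : pt) : pt := P3 (L1 z) (L2 z) (L3 z).
Definition sig (m : pt) : pt := P3 (c2 m * c3 m) (c1 m * c3 m) (c1 m * c2 m).
Definition Xb (l : pt) : pt := P3 (c2 l + c3 l) (c1 l + c3 l) (c1 l + c2 l).
Definition Xz (z : pt) : pt := Xb (sig (mlin z)).
Definition PL (z : pt) : R := L1 z * L2 z * L3 z.

Lemma pt_ext a b : c1 a = c1 b -> c2 a = c2 b -> c3 a = c3 b -> a = b.
Proof. destruct a, b; simpl; intros; subst; reflexivity. Qed.

Ltac ptring := apply pt_ext; unfold Xz, fhom, Xb, sig, mlin, scale, gmap, hmap, PL, L1, L2, L3, ssum; cbn [c1 c2 c3]; ring.

Lemma nrm_scale c v : c <> 0 -> ssum v <> 0 -> nrm (scale c v) = nrm v.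
Proof. intros Hc Hv. unfold ssum in Hv. apply pt_ext; unfold nrm, scale; cbn [c1 c2 c3]; field; (split; [auto|]); intro E; apply Hv; apply Rmult_eq_reg_l with c; auto; rewrite Rmult_0_r, <- E; ring. Qed.

Lemma nrm_chart v : chart v -> nrm v = v.
Proof. unfold chart; intro H. apply pt_ext; unfold nrm; cbn [c1 c2 c3]; rewrite H; field. Qed.

Lemma nrm_as_scale v : nrm v = scale (/ ssum v) v.
Proof. apply pt_ext; unfold nrm, scale, ssum; cbn [c1 c2 c3]; unfold Rdiv; ring. Qed.

Lemma ssum_scale c v : ssum (scale c v) = c * ssum v.
Proof. unfold ssum, scale; cbn [c1 c2 c3]; ring. Qed.

Lemma Xz_scale c z : Xz (scale c z) = scale (c^2) (Xz z). Proof. ptring. Qed.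
Lemma Xz_h x : Xz (hmap x) = scale (2 * PL x) x. Proof. ptring. Qed.
Lemma fhom_scale c X : fhom (scale c X) = scale (c^4) (fhom X). Proof. ptring. Qed.
Lemma fhom_Xz z : fhom (Xz z) = scale (16 * (PL z)^2) (gmap z). Proof. ptring. Qed.

Lemma rho_gmap z : rho (gmap z) = - ssum z * PL z.
Proof. unfold rho, gmap, ssum, PL, L1, L2, L3; cbn [c1 c2 c3]; ring. Qed.
Lemma rho_Xz z : rho (Xz z) = 4 * rho (gmap z).
Proof. unfold Xz, rho, gmap, Xb, sig, mlin, L1, L2, L3; cbn [c1 c2 c3]; ring. Qed.
Lemma rho_fhom x : rho (fhom x) = rho x * (PL x)^2.
Proof. unfold fhom, rho, gmap, hmap, PL, L1, L2, L3; cbn [c1 c2 c3]; ring. Qed.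
Lemma rho_scale c v : rho (scale c v) = c^2 * rho v.
Proof. unfold rho, scale; cbn [c1 c2 c3]; ring. Qed.

Lemma rho_neg_sum v : rho v < 0 -> ssum v <> 0.
Proof.
  unfold rho, ssum; intros H E.
  assert (c3 v = - c1 v - c2 v) by lra. rewrite H0 in H.
  nra.
Qed.

Lemma U_of_rho v : rho v < 0 -> U (nrm v).
Proof.
  intro H. pose proof (rho_neg_sum v H) as Hs. rewrite nrm_as_scale. split.
  - unfold chart. fold (ssum (scale (/ ssum v) v)). rewrite ssum_scale. field; auto.
  - rewrite rho_scale. assert (0 < (/ ssum v)^2) by (replace ((/ssum v)^2) with (Rsqr (/ssum v)) by (unfold Rsqr; ring); apply Rsqr_pos_lt; apply Rinv_neq_0_compat; auto). nra.
Qed.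

Lemma L1_scale c v : L1 (scale c v) = c * L1 v. Proof. unfold L1, scale; cbn [c1 c2 c3]; ring. Qed.
Lemma L2_scale c v : L2 (scale c v) = c * L2 v. Proof. unfold L2, scale; cbn [c1 c2 c3]; ring. Qed.
Lemma L3_scale c v : L3 (scale c v) = c * L3 v. Proof. unfold L3, scale; cbn [c1 c2 c3]; ring. Qed.

Definition sg (j i : nat) : R := if Nat.eqb j i then -1 else 1.
Definition zf (j : nat) (y : pt) : pt :=
  P3 (sg j 1 * sqrt (c1 y)) (sg j 2 * sqrt (c2 y)) (sg j 3 * sqrt (c3 y)).
Definition kinv (j : nat) (y : pt) : pt := nrm (Xz (zf j y)).

Lemma sg_sq j i : sg j i * sg j i = 1. Proof. unfold sg; destruct Nat.eqb; ring. Qed.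

Lemma gmap_zf j y : 0 <= c1 y -> 0 <= c2 y -> 0 <= c3 y -> gmap (zf j y) = y.
Proof.
  intros. apply pt_ext; unfold gmap, zf; cbn [c1 c2 c3];
  match goal with |- (sg j ?i * sqrt ?a) ^ 2 = _ =>
    replace ((sg j i * sqrt a) ^ 2) with ((sg j i * sg j i) * (sqrt a * sqrt a)) by ring;
    rewrite sg_sq, sqrt_sqrt by auto; ring end.
Qed.

Lemma U_nonneg y : U y -> 0 <= c1 y /\ 0 <= c2 y /\ 0 <= c3 y.
Proof. intro H; destruct (U_pos y H) as [? [? ?]]; lra. Qed.

Lemma W_pos y : U y -> let w := zf 0 y in
  0 < c1 w /\ 0 < c2 w /\ 0 < c3 w /\ 0 < L1 w /\ 0 < L2 w /\ 0 < L3 w.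
Proof.
  intros HU w. destruct (U_pos y HU) as [p1 [p2 p3]].
  assert (0 < c1 w) by (unfold w, zf, sg; simpl; rewrite Rmult_1_l; apply sqrt_lt_R0; auto).
  assert (0 < c2 w) by (unfold w, zf, sg; simpl; rewrite Rmult_1_l; apply sqrt_lt_R0; auto).
  assert (0 < c3 w) by (unfold w, zf, sg; simpl; rewrite Rmult_1_l; apply sqrt_lt_R0; auto).
  assert (Hr : rho (gmap w) < 0) by (unfold w; rewrite gmap_zf by lra; apply HU).
  rewrite rho_gmap in Hr. unfold ssum, PL in Hr.
  assert (0 < L1 w * L2 w * L3 w) by (apply Rmult_lt_reg_l with (c1 w + c2 w + c3 w); [lra|]; rewrite Rmult_0_r; lra).
  assert (L1 w + L2 w = 2 * c3 w) by (unfold L1, L2; ring).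
  assert (L1 w + L3 w = 2 * c2 w) by (unfold L1, L3; ring).
  assert (L2 w + L3 w = 2 * c1 w) by (unfold L2, L3; ring).
  repeat split; auto.
  - destruct (Rlt_or_le 0 (L1 w)); auto. assert (0 < L2 w) by lra. assert (0 < L3 w) by lra. assert (0 < L2 w * L3 w) by nra. nra.
  - destruct (Rlt_or_le 0 (L2 w)); auto. assert (0 < L1 w) by lra. assert (0 < L3 w) by lra. assert (0 < L1 w * L3 w) by nra. nra.
  - destruct (Rlt_or_le 0 (L3 w)); auto. assert (0 < L2 w) by lra. assert (0 < L1 w) by lra. assert (0 < L1 w * L2 w) by nra. nra.
Qed.

Lemma LX1 z : L1 (Xz z) = 2 * (L2 z * L3 z). Proof. unfold Xz, Xb, sig, mlin, L1, L2, L3; cbn [c1 c2 c3]; ring. Qed.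
Lemma LX2 z : L2 (Xz z) = 2 * (L1 z * L3 z). Proof. unfold Xz, Xb, sig, mlin, L1, L2, L3; cbn [c1 c2 c3]; ring. Qed.
Lemma LX3 z : L3 (Xz z) = 2 * (L1 z * L2 z). Proof. unfold Xz, Xb, sig, mlin, L1, L2, L3; cbn [c1 c2 c3]; ring. Qed.

Lemma neg1 x : U x -> L1 x * L2 x < 0 -> L1 x * L3 x < 0 -> L1 x < 0.
Proof. intros HU a b. destruct (L_sums x HU) as [? [? ?]]. destruct (Rlt_or_le (L1 x) 0); auto. nra. Qed.
Lemma neg2 x : U x -> L2 x * L1 x < 0 -> L2 x * L3 x < 0 -> L2 x < 0.
Proof. intros HU a b. destruct (L_sums x HU) as [? [? ?]]. destruct (Rlt_or_le (L2 x) 0); auto. nra. Qed.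
Lemma neg3 x : U x -> L3 x * L1 x < 0 -> L3 x * L2 x < 0 -> L3 x < 0.
Proof. intros HU a b. destruct (L_sums x HU) as [? [? ?]]. destruct (Rlt_or_le (L3 x) 0); auto. nra. Qed.

Lemma rho_X j y : U y -> rho (Xz (zf j y)) < 0.
Proof.
  intro HU. rewrite rho_Xz. destruct (U_nonneg y HU) as [? [? ?]].
  rewrite gmap_zf by auto. destruct HU; lra.
Qed.

Lemma kinv_in j y : (j <= 3)%nat -> U y -> Ucomp j (kinv j y).
Proof.
  intros Hj HU. pose proof (rho_X j y HU) as Hr.
  pose proof (rho_neg_sum _ Hr) as Hs.
  assert (HUk : U (kinv j y)) by (apply U_of_rho; auto).
  apply Ucomp_iff. pose proof (W_pos y HU) as HW. cbv zeta in HW. destruct HW as [w1 [w2 [w3 [n1 [n2 n3]]]]].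
  set (w := zf 0 y) in *.
  set (c := / ssum (Xz (zf j y))).
  assert (Hc : c <> 0) by (apply Rinv_neq_0_compat; auto).
  assert (E : kinv j y = scale c (Xz (zf j y))) by (unfold kinv; apply nrm_as_scale).
  assert (Hc2 : 0 < c * c) by (destruct (Rlt_or_le 0 c); nra).
  assert (K1 : L1 (kinv j y) = c * (2 * (L2 (zf j y) * L3 (zf j y)))) by (rewrite E, L1_scale, LX1; auto).
  assert (K2 : L2 (kinv j y) = c * (2 * (L1 (zf j y) * L3 (zf j y)))) by (rewrite E, L2_scale, LX2; auto).
  assert (K3 : L3 (kinv j y) = c * (2 * (L1 (zf j y) * L2 (zf j y)))) by (rewrite E, L3_scale, LX3; auto).
  destruct (L_sums _ HUk) as [s12 [s13 s23]].
  destruct j as [|[|[|[|j]]]]; try lia.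
  - fold w in K1, K2, K3. split; auto. rewrite K1, K2, K3 in *.
    assert (0 < L1 w * L2 w) by nra. assert (0 < L1 w * L3 w) by nra. assert (0 < L2 w * L3 w) by nra.
    destruct (Rlt_or_le 0 c); [repeat split; nra|].
    exfalso. assert (c < 0) by lra. nra.
  - assert (L1 (zf 1 y) = c1 w + c2 w + c3 w) by (unfold w, zf, sg, L1; simpl; ring).
    assert (L2 (zf 1 y) = - L3 w) by (unfold w, zf, sg, L2, L3; simpl; ring).
    assert (L3 (zf 1 y) = - L2 w) by (unfold w, zf, sg, L2, L3; simpl; ring).
    split; auto. apply neg1; auto; rewrite ?K1, ?K2, ?K3, ?H, ?H0, ?H1.
    + replace (c * (2 * (- L3 w * - L2 w)) * (c * (2 * ((c1 w + c2 w + c3 w) * - L2 w))))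
        with (-(c*c) * (4 * (L2 w * L2 w) * L3 w * (c1 w + c2 w + c3 w))) by ring.
      assert (0 < 4 * (L2 w * L2 w) * L3 w * (c1 w + c2 w + c3 w)) by
        (repeat apply Rmult_lt_0_compat; lra). nra.
    + replace (c * (2 * (- L3 w * - L2 w)) * (c * (2 * ((c1 w + c2 w + c3 w) * - L3 w))))
        with (-(c*c) * (4 * (L3 w * L3 w) * L2 w * (c1 w + c2 w + c3 w))) by ring.
      assert (0 < 4 * (L3 w * L3 w) * L2 w * (c1 w + c2 w + c3 w)) by
        (repeat apply Rmult_lt_0_compat; lra). nra.
  - assert (L2 (zf 2 y) = c1 w + c2 w + c3 w) by (unfold w, zf, sg, L2; simpl; ring).
    assert (L1 (zf 2 y) = - L3 w) by (unfold w, zf, sg, L1, L3; simpl; ring).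
    assert (L3 (zf 2 y) = - L1 w) by (unfold w, zf, sg, L1, L3; simpl; ring).
    split; auto. apply neg2; auto; rewrite ?K1, ?K2, ?K3, ?H, ?H0, ?H1.
    + replace (c * (2 * (- L3 w * - L1 w)) * (c * (2 * ((c1 w + c2 w + c3 w) * - L1 w))))
        with (-(c*c) * (4 * (L1 w * L1 w) * L3 w * (c1 w + c2 w + c3 w))) by ring.
      assert (0 < 4 * (L1 w * L1 w) * L3 w * (c1 w + c2 w + c3 w)) by
        (repeat apply Rmult_lt_0_compat; lra). nra.
    + replace (c * (2 * (- L3 w * - L1 w)) * (c * (2 * (- L3 w * (c1 w + c2 w + c3 w)))))
        with (-(c*c) * (4 * (L3 w * L3 w) * L1 w * (c1 w + c2 w + c3 w))) by ring.
      assert (0 < 4 * (L3 w * L3 w) * L1 w * (c1 w + c2 w + c3 w)) by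
        (repeat apply Rmult_lt_0_compat; lra). nra.
  - assert (L3 (zf 3 y) = c1 w + c2 w + c3 w) by (unfold w, zf, sg, L3; simpl; ring).
    assert (L1 (zf 3 y) = - L2 w) by (unfold w, zf, sg, L1, L2; simpl; ring).
    assert (L2 (zf 3 y) = - L1 w) by (unfold w, zf, sg, L1, L2; simpl; ring).
    split; auto. apply neg3; auto; rewrite ?K1, ?K2, ?K3, ?H, ?H0, ?H1.
    + replace (c * (2 * (- L1 w * - L2 w)) * (c * (2 * (- L1 w * (c1 w + c2 w + c3 w)))))
        with (-(c*c) * (4 * (L1 w * L1 w) * L2 w * (c1 w + c2 w + c3 w))) by ring.
      assert (0 < 4 * (L1 w * L1 w) * L2 w * (c1 w + c2 w + c3 w)) by
        (repeat apply Rmult_lt_0_compat; lra). nra.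
    + replace (c * (2 * (- L1 w * - L2 w)) * (c * (2 * (- L2 w * (c1 w + c2 w + c3 w)))))
        with (-(c*c) * (4 * (L2 w * L2 w) * L1 w * (c1 w + c2 w + c3 w))) by ring.
      assert (0 < 4 * (L2 w * L2 w) * L1 w * (c1 w + c2 w + c3 w)) by
        (repeat apply Rmult_lt_0_compat; lra). nra.
Qed.

Lemma scale_scale a b v : scale a (scale b v) = scale (a * b) v. Proof. ptring. Qed.

Lemma PL_ne x : Uminus x -> PL x <> 0.
Proof.
  intro H; apply Uminus_iff in H. destruct H as [_ [? [? ?]]]. unfold PL.
  repeat apply Rmult_integral_contrapositive_currified; auto.
Qed.

Lemma fchart_in j x : Ucomp j x -> U (fchart x).
Proof.
  intro H. pose proof (Ucomp_sub j x H) as Hm. pose proof (PL_ne x Hm) as Hp.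
  apply Ucomp_iff in H. assert (Hr : rho x < 0) by (destruct j as [|[|[|j]]]; destruct H as [[_ r] _]; auto).
  unfold fchart. apply U_of_rho. rewrite rho_fhom.
  assert (0 < PL x ^ 2) by (replace (PL x ^ 2) with (Rsqr (PL x)) by (unfold Rsqr; ring); apply Rsqr_pos_lt; auto).
  nra.
Qed.

Lemma sgpos j x : (j <= 3)%nat -> Ucomp j x ->
  0 < sg j 1 * (c1 x * L1 x) /\ 0 < sg j 2 * (c2 x * L2 x) /\ 0 < sg j 3 * (c3 x * L3 x).
Proof.
  intros Hj H. apply Ucomp_iff in H.
  destruct j as [|[|[|[|j]]]]; try lia; destruct H as [HU H];
  destruct (U_pos x HU) as [? [? ?]]; destruct (L_sums x HU) as [? [? ?]]; unfold sg; simpl;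
  repeat split; nra.
Qed.

Lemma S_pos j x : (j <= 3)%nat -> Ucomp j x -> 0 < ssum (fhom x).
Proof.
  intros Hj H. destruct (sgpos j x Hj H) as [p1 [p2 p3]].
  change (ssum (fhom x)) with ((c1 x * L1 x)^2 + (c2 x * L2 x)^2 + (c3 x * L3 x)^2).
  assert (forall s a, s * s = 1 -> 0 < s * a -> 0 < a^2).
  { intros s a Hs Ha. replace (a^2) with ((s*a)^2) by (replace ((s*a)^2) with ((s*s)*a^2) by ring; rewrite Hs; ring).
    apply pow_lt; auto. }
  pose proof (H0 _ _ (sg_sq j 1) p1). pose proof (H0 _ _ (sg_sq j 2) p2). pose proof (H0 _ _ (sg_sq j 3) p3). lra.
Qed.

Lemma sg_sqrt s a S : s * s = 1 -> 0 < s * a -> s * sqrt (a ^ 2 / S) = sqrt (/ S) * a.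
Proof.
  intros Hs Ha. replace (a ^ 2 / S) with ((s * a) ^ 2 * / S)
    by (unfold Rdiv; replace ((s*a)^2) with ((s*s)*a^2) by ring; rewrite Hs; ring).
  rewrite sqrt_mult_alt by apply pow2_ge_0. rewrite sqrt_pow2 by lra.
  replace (s * (s * a * sqrt (/ S))) with ((s * s) * a * sqrt (/ S)) by ring. rewrite Hs; ring.
Qed.

Lemma kinv_fchart j x : (j <= 3)%nat -> Ucomp j x -> kinv j (fchart x) = x.
Proof.
  intros Hj H. pose proof (S_pos j x Hj H) as HS. set (S := ssum (fhom x)) in *.
  destruct (sgpos j x Hj H) as [p1 [p2 p3]].
  assert (Z : zf j (fchart x) = scale (sqrt (/ S)) (hmap x)).
  { apply pt_ext; unfold zf, scale; cbn [c1 c2 c3].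
    - change (c1 (fchart x)) with ((c1 x * L1 x)^2 / S). apply sg_sqrt; auto; apply sg_sq.
    - change (c2 (fchart x)) with ((c2 x * L2 x)^2 / S). apply sg_sqrt; auto; apply sg_sq.
    - change (c3 (fchart x)) with ((c3 x * L3 x)^2 / S). apply sg_sqrt; auto; apply sg_sq. }
  unfold kinv. rewrite Z, Xz_scale, Xz_h, scale_scale.
  assert (0 < sqrt (/ S)) by (apply sqrt_lt_R0, Rinv_0_lt_compat; auto).
  pose proof (PL_ne x (Ucomp_sub j x H)).
  assert (Hx : U x) by (apply Ucomp_iff in H; destruct j as [|[|[|j]]]; tauto).
  rewrite nrm_scale.
  - apply nrm_chart, Hx.
  - apply Rmult_integral_contrapositive_currified; [apply pow_nonzero; lra|].
    apply Rmult_integral_contrapositive_currified; auto; lra.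
  - destruct Hx as [Hc _]. unfold ssum; unfold chart in Hc; lra.
Qed.

Lemma fchart_kinv j y : U y -> fchart (kinv j y) = y.
Proof.
  intro HU. pose proof (rho_X j y HU) as Hr. pose proof (rho_neg_sum _ Hr) as Hs.
  destruct (U_nonneg y HU) as [n1 [n2 n3]].
  set (z := zf j y) in *.
  assert (Hg : gmap z = y) by (apply gmap_zf; auto).
  assert (HP : PL z <> 0).
  { intro E. destruct HU as [_ Hry]. rewrite <- Hg, rho_gmap, E in Hry. lra. }
  assert (Hy1 : ssum y = 1) by (destruct HU as [Hc _]; apply Hc).
  unfold fchart, kinv. fold z. rewrite (nrm_as_scale (Xz z)), fhom_scale, nrm_scale.
  - rewrite fhom_Xz, Hg, nrm_scale.
    + apply nrm_chart, HU.
    + apply Rmult_integral_contrapositive_currified; [lra|]. apply pow_nonzero; auto.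
    + lra.
  - apply pow_nonzero, Rinv_neq_0_compat; auto.
  - rewrite fhom_Xz, ssum_scale, Hg, Hy1. rewrite Rmult_1_r.
    apply Rmult_integral_contrapositive_currified; [lra|]. apply pow_nonzero; auto.
Qed.

Lemma cont_nrm A (G : pt -> pt) :
  cont3 A (fun x => c1 (G x)) -> cont3 A (fun x => c2 (G x)) -> cont3 A (fun x => c3 (G x)) ->
  (forall x, A x -> ssum (G x) <> 0) -> continuous_on A (fun x => nrm (G x)).
Proof.
  intros H1 H2 H3 Hs.
  assert (HS : cont3 A (fun x => c1 (G x) + c2 (G x) + c3 (G x))) by (apply cont3_plus; [apply cont3_plus|]; auto).
  apply cont_on; [apply cont3_ext with (fun x => c1 (G x) / (c1 (G x) + c2 (G x) + c3 (G x)))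
                 |apply cont3_ext with (fun x => c2 (G x) / (c1 (G x) + c2 (G x) + c3 (G x)))
                 |apply cont3_ext with (fun x => c3 (G x) / (c1 (G x) + c2 (G x) + c3 (G x)))];
  try (intros; reflexivity); apply cont3_div; auto.
Qed.

Lemma cont3_Lc A (G : pt -> pt) :
  cont3 A (fun x => c1 (G x)) -> cont3 A (fun x => c2 (G x)) -> cont3 A (fun x => c3 (G x)) ->
  cont3 A (fun x => L1 (G x)) /\ cont3 A (fun x => L2 (G x)) /\ cont3 A (fun x => L3 (G x)).
Proof.
  intros. unfold L1, L2, L3. repeat split;
  repeat first [apply cont3_plus | apply cont3_minus | apply cont3_opp]; auto.
Qed.

Lemma fchart_cont j : (j <= 3)%nat -> continuous_on (Ucomp j) fchart.
Proof.
  intro Hj. unfold fchart. apply cont_nrm.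
  - apply cont3_ext with (fun x => (c1 x * L1 x)^2); [|intros; reflexivity].
    apply cont3_pow2, cont3_mult; [apply cont3_c1|apply cont3_L1].
  - apply cont3_ext with (fun x => (c2 x * L2 x)^2); [|intros; reflexivity].
    apply cont3_pow2, cont3_mult; [apply cont3_c2|apply cont3_L2].
  - apply cont3_ext with (fun x => (c3 x * L3 x)^2); [|intros; reflexivity].
    apply cont3_pow2, cont3_mult; [apply cont3_c3|apply cont3_L3].
  - intros x H. pose proof (S_pos j x Hj H); lra.
Qed.

Lemma kinv_cont j : continuous_on U (kinv j).
Proof.
  unfold kinv. apply (cont_nrm U (fun y => Xz (zf j y))).
  3: idtac.
  all: try (intros y HU; apply rho_neg_sum, rho_X, HU).
  all: assert (Z1 : cont3 U (fun y => c1 (zf j y))) by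
      (apply cont3_ext with (fun y => sg j 1 * sqrt (c1 y)); [|intros; reflexivity];
       apply cont3_scal, cont3_sqrt; [apply cont3_c1|intros; apply U_nonneg; auto]).
  all: assert (Z2 : cont3 U (fun y => c2 (zf j y))) by
      (apply cont3_ext with (fun y => sg j 2 * sqrt (c2 y)); [|intros; reflexivity];
       apply cont3_scal, cont3_sqrt; [apply cont3_c2|intros; apply U_nonneg; auto]).
  all: assert (Z3 : cont3 U (fun y => c3 (zf j y))) by
      (apply cont3_ext with (fun y => sg j 3 * sqrt (c3 y)); [|intros; reflexivity];
       apply cont3_scal, cont3_sqrt; [apply cont3_c3|intros; apply U_nonneg; auto]).
  all: destruct (cont3_Lc U (zf j) Z1 Z2 Z3) as [M1 [M2 M3]].
  - apply cont3_ext with (fun y => L1 (zf j y) * L3 (zf j y) + L1 (zf j y) * L2 (zf j y)); [|intros; reflexivity].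
    apply cont3_plus; apply cont3_mult; auto.
  - apply cont3_ext with (fun y => L2 (zf j y) * L3 (zf j y) + L1 (zf j y) * L2 (zf j y)); [|intros; reflexivity].
    apply cont3_plus; apply cont3_mult; auto.
  - apply cont3_ext with (fun y => L2 (zf j y) * L3 (zf j y) + L1 (zf j y) * L3 (zf j y)); [|intros; reflexivity].
    apply cont3_plus; apply cont3_mult; auto.
Qed.

Theorem part3 : forall j : nat, (j <= 3)%nat -> homeo_onto fchart (Ucomp j) U.
Proof.
  intros j Hj. split; [intros; eapply fchart_in; eauto|]. split; [apply fchart_cont; auto|].
  exists (kinv j). split; [intros; apply kinv_in; auto|]. split; [intros; apply kinv_fchart; auto|].
  split; [intros; apply fchart_kinv; auto|]. apply kinv_cont.
Qed.

Theorem mainTheorem17 :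
  (* the connected components of U \ (A1 u A2 u A3) are exactly U_0,...,U_3 *)
  (forall C : set, is_component Uminus C <->
     exists j : nat, (j <= 3)%nat /\ seteq C (Ucomp j)) /\
  (* and they are four distinct sets *)
  (forall i j : nat, (i <= 3)%nat -> (j <= 3)%nat -> i <> j ->
     ~ seteq (Ucomp i) (Ucomp j)) /\
  (* f maps each U_j homeomorphically onto U *)
  (forall j : nat, (j <= 3)%nat -> homeo_onto fchart (Ucomp j) U).
Proof.
  split; [exact part1|]. split; [exact part2|exact part3].
Qed.
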